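(* Let $G$ be a connected graph, let $u,v\in V(G)$, and let $u=w_0,w_1,\dots,w_k=v$ with $k\geq 2$ be an internal path between $u$ and $v$, i.e. $w_iw_{i+1}\in E(G)$ for $0\le i\le k-1$ and each of $w_1,\dots,w_{k-1}$ has degree two in $G$. Let $H=G-w_1-\dots-w_{k-1}$ be the graph obtained by deleting $w_1,\dots,w_{k-1}$ from $G$. Then the sequence $Tr_G(w_0),Tr_G(w_1),\dots,Tr_G(w_k)$ is unimodal if $H$ is connected, and inversely unimodal if $H$ is disconnected.
   Context: $Tr_G(x)=\sum_{y\in V(G)} d_G(x,y)$ is the transmission of $x$, where $d_G$ is the shortest-path distance. A sequence $s_1,\dots,s_m$ is unimodal if there is $t\in\{1,\dots,m\}$ with $s_1\le\dots\le s_t\ge s_{t+1}\ge\dots\ge s_m$, and inversely unimodal if there is $t$ with $s_1\ge\dots\ge s_t\le s_{t+1}\le\dots\le s_m$. *)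

(* Defs.v *)
(* A finite simple graph is a symmetric irreflexive
   relation e : rel T on a finite vertex type T. *)
From mathcomp Require Import all_boot all_order.
Set Implicit Arguments. Unset Strict Implicit. Unset Printing Implicit Defensive.

Definition walk_of_len (T : finType) (e : rel T) (n : nat) (x y : T) : bool :=
  [exists p : n.-tuple T, path e x p && (last x p == y)].

(* shortest-path distance: the least n < #|T| admitting a walk of length n
   (in a connected graph such an n always exists; otherwise #|T|) *)
Definition dist (T : finType) (e : rel T) (x y : T) : nat :=
  find (fun n => walk_of_len e n x y) (iota 0 #|T|).

Definition Tr (T : finType) (e : rel T) (x : T) : nat := \sum_(y : T) dist e x y.

Definition deg (T : finType) (e : rel T) (x : T) : nat := #|[set y | e x y]|.

Definition connected (T : finType) (e : rel T) : Prop := forall x y, connect e x y.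

Definition connected_on (T : finType) (e : rel T) (S : {set T}) : Prop :=
  forall x y, x \in S -> y \in S ->
    connect [rel a b | [&& a \in S, b \in S & e a b]] x y.

Definition unimodal (s : nat -> nat) (k : nat) : Prop :=
  exists2 t, t <= k &
    (forall i, i < t -> s i <= s i.+1) /\ (forall i, t <= i < k -> s i.+1 <= s i).

Definition inv_unimodal (s : nat -> nat) (k : nat) : Prop :=
  exists2 t, t <= k &
    (forall i, i < t -> s i.+1 <= s i) /\ (forall i, t <= i < k -> s i <= s i.+1).

(* Main.v *)
Require Import Defs.
From mathcomp Require Import all_boot all_order.
From mathcomp Require Import zify.
Set Implicit Arguments. Unset Strict Implicit. Unset Printing Implicit Defensive.

Lemma walkP (T : finType) (e : rel T) n x y :
  reflect (exists p : seq T, [/\ size p = n, path e x p & last x p = y])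
          (walk_of_len e n x y).
Proof.
apply: (iffP existsP) => [[t /andP[pt /eqP lt]]|[p [sp pp lp]]].
  by exists (tval t); rewrite size_tuple.
have sp' : size p == n by rewrite sp.
by exists (Tuple sp'); rewrite /= pp lp eqxx.
Qed.

Lemma walk0 (T : finType) (e : rel T) (x y : T) : walk_of_len e 0 x y = (x == y).
Proof.
apply/walkP/eqP => [[p [/size0nil -> _ /= ->]]|->] //.
by exists [::].
Qed.

Lemma walk_cons (T : finType) (e : rel T) (x z y : T) n :
  e x z -> walk_of_len e n z y -> walk_of_len e n.+1 x y.
Proof.
move=> exz /walkP [p [sp pp lp]]; apply/walkP; exists (z :: p); split => //=.
- by rewrite sp.
- by rewrite exz.
Qed.

Lemma walkS (T : finType) (e : rel T) (x y : T) n :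
  walk_of_len e n.+1 x y -> exists2 z, e x z & walk_of_len e n z y.
Proof.
move=> /walkP [[|z p] [//= [sp] /andP[exz pp] lp]].
by exists z => //; apply/walkP; exists p; split.
Qed.

Lemma dist_le (T : finType) (e : rel T) (x y : T) n :
  walk_of_len e n x y -> dist e x y <= n.
Proof.
move=> w; rewrite /dist.
case: (ltnP n #|T|) => hn.
  rewrite leqNgt; apply/negP => /(before_find 0).
  by rewrite nth_iota // add0n w.
by apply: leq_trans (find_size _ _) _; rewrite size_iota.
Qed.

Lemma dist_walk (T : finType) (e : rel T) (x y : T) :
  connect e x y -> walk_of_len e (dist e x y) x y.
Proof.
move=> /connectP [p pp ->].
case/shortenP: pp => p' pp' up' _.
have hw : walk_of_len e (size p') x (last x p') by apply/walkP; exists p'.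
have hs : size p' < #|T|.
  by have := max_card (mem (x :: p')); rewrite (card_uniqP up').
have hh : has (fun n => walk_of_len e n x (last x p')) (iota 0 #|T|).
  by apply/hasP; exists (size p') => //; rewrite mem_iota.
have hf := hh; rewrite has_find size_iota in hf.
by have := nth_find 0 hh; rewrite /dist nth_iota ?add0n.
Qed.


Lemma dist_self (T : finType) (e : rel T) (x : T) : dist e x x = 0.
Proof. by apply/eqP; rewrite -leqn0; apply: dist_le; rewrite walk0. Qed.

Lemma dist0 (T : finType) (e : rel T) (x y : T) :
  connect e x y -> dist e x y = 0 -> x = y.
Proof. by move=> /dist_walk + h; rewrite h walk0 => /eqP. Qed.

Lemma dist_edge_l (T : finType) (e : rel T) (x z y : T) :
  connect e z y -> e x z -> dist e x y <= (dist e z y).+1.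
Proof. by move=> c exz; apply: dist_le; apply: walk_cons exz (dist_walk c). Qed.

Lemma dist_edge_r (T : finType) (e : rel T) (x z y : T) :
  symmetric e -> connect e x z -> e z y -> dist e x y <= (dist e x z).+1.
Proof.
move=> sym c ezy; have := dist_walk c; move: (dist e x z) => n /walkP [p [sp pp lp]].
apply: dist_le; apply/walkP; exists (rcons p y); split.
- by rewrite size_rcons sp.
- by rewrite rcons_path pp lp ezy.
- by rewrite last_rcons.
Qed.

Lemma dist_first (T : finType) (e : rel T) (x y : T) :
  (forall a b, connect e a b) -> x != y ->
  exists2 z, e x z & dist e z y < dist e x y.
Proof.
move=> conn nxy; have := dist_walk (conn x y).
case hd: (dist e x y) => [|n].
  by move: hd => /(dist0 (conn x y)) /eqP; rewrite (negbTE nxy).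
move=> /walkS [z exz wz]; exists z => //; exact: dist_le wz.
Qed.

Lemma nbr2 (T : finType) (e : rel T) (x a b z : T) :
  deg e x = 2 -> e x a -> e x b -> a != b -> e x z -> z = a \/ z = b.
Proof.
move=> hd xa xb ab xz; case: (boolP (z == a)) => [/eqP|za]; first by left.
case: (boolP (z == b)) => [/eqP|zb]; first by right.
have : #|z |: [set a; b]| <= deg e x.
  apply: subset_leq_card; apply/subsetP => y; rewrite !inE.
  by case/or3P => /eqP ->.
by rewrite hd cardsU1 cards2 !inE ab negb_or za zb.
Qed.

Lemma sum_ind1 (T : finType) (y1 : T) : \sum_(y : T) (y == y1 : nat) = 1.
Proof.
rewrite (bigD1 y1) //= eqxx big1 // => y /negbTE ->; done.
Qed.

Lemma concave_gen (T : finType) (e : rel T) (x a b : T) :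
  symmetric e -> irreflexive e -> (forall p q, connect e p q) ->
  a != b -> e x a -> e x b -> (forall z, e x z -> z = a \/ z = b) ->
  connect [rel p q | [&& p != x, q != x & e p q]] a b ->
  Tr e a + Tr e b <= 2 * Tr e x.
Proof.
move=> sym irr conn nab xa xb nbr cab.
have ax : a != x by apply/eqP => ax; move: xa; rewrite ax irr.
have bx : b != x by apply/eqP => bx; move: xb; rewrite bx irr.
set da := dist e a; set db := dist e b; set dx := dist e x.
have F1 y : y != x -> dx y <= (da y).+1 /\ dx y <= (db y).+1 /\
   (da y < dx y \/ db y < dx y).
  move=> yx; split; first exact: (dist_edge_l (conn _ _)).
  split; first exact: (dist_edge_l (conn _ _)).
  have yx' : x != y by rewrite eq_sym.
  have [z xz hz] := dist_first conn yx'.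
  by case: (nbr z xz) => hz'; rewrite hz' in hz; [left|right].
have F2 y : da y <= (dx y).+1 /\ db y <= (dx y).+1.
  by split; apply: (dist_edge_l (conn _ _)); rewrite sym.
have Fx : da x = 1 /\ db x = 1 /\ dx x = 0.
  rewrite /dx dist_self; split; last split => //.
    apply/eqP; rewrite eqn_leq; apply/andP; split.
      by have := @dist_edge_l _ e a x x (conn _ _); rewrite sym xa dist_self; apply.
    rewrite lt0n; apply/eqP => /(dist0 (conn _ _)) /eqP; by rewrite (negbTE ax).
  apply/eqP; rewrite eqn_leq; apply/andP; split.
    by have := @dist_edge_l _ e b x x (conn _ _); rewrite sym xb dist_self; apply.
  rewrite lt0n; apply/eqP => /(dist0 (conn _ _)) /eqP; by rewrite (negbTE bx).
have Fab : da a = 0 /\ db b = 0 by rewrite /da /db !dist_self.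
have Fa0 : 0 < db a.
  rewrite lt0n; apply/eqP => /(dist0 (conn _ _)) /eqP; by rewrite eq_sym (negbTE nab).
have Fb0 : 0 < da b.
  rewrite lt0n; apply/eqP => /(dist0 (conn _ _)) /eqP; by rewrite (negbTE nab).
have Ed z z' : e z z' -> da z' <= (da z).+1 /\ db z <= (db z').+1.
  move=> ezz'; split; first exact: (dist_edge_r sym (conn _ _)).
  by apply: (dist_edge_r sym (conn _ _)); rewrite sym.
have cross : (exists y, y != x /\ da y = db y) \/
   (exists y1 y2, [/\ y1 != x, y2 != x, db y1 = (da y1).+1 & da y2 = (db y2).+1]).
  case/connectP: cab => p pp lp.
  have : da a < db a by rewrite Fab.1.
  have : db (last a p) < da (last a p) by rewrite -lp Fab.2.
  clear lp; move: pp; move: (a) ax => a0 a0x.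
  elim: p a0 a0x => [|z' p IH] z zx /=.
    move=> _ h1 h2; move: (ltn_trans h1 h2); by rewrite ltnn.
  move=> /andP[/and3P[_ z'x ezz'] pp] hl hz.
  case: (ltngtP (da z') (db z')) => h.
  - exact: IH hl h.
  - right; exists z, z'; have := Ed _ _ ezz'; split => //; lia.
  - by left; exists z'.
have pt y : y != x -> da y + db y <= dx y + dx y.
  move=> yx; have := F1 y yx; have := F2 y; lia.
have key : exists y1 y2, [/\ y1 != x, y2 != x &
   forall y, da y + db y + (y == y1) + (y == y2) <= dx y + dx y + (y == x) + (y == x)].
  case: cross => [[y [yx hy]]|[y1 [y2 [y1x y2x h1 h2]]]].
    exists y, y; split => // z.
    case: (eqVneq z x) => [->|zx].
      have xy : (x == y) = false by rewrite eq_sym (negbTE yx).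
      rewrite xy ?eqxx; move: Fx => [-> [-> ->]]; done.
    case: (eqVneq z y) => [->|zy].
      have := F1 y yx; rewrite ?eqxx ?(negbTE yx) hy; lia.
    rewrite ?(negbTE zx) ?(negbTE zy) !addn0; exact: pt.
  exists y1, y2; split => // z.
  case: (eqVneq z x) => [->|zx].
    have xy1 : (x == y1) = false by rewrite eq_sym (negbTE y1x).
    have xy2 : (x == y2) = false by rewrite eq_sym (negbTE y2x).
    rewrite xy1 xy2 ?eqxx; move: Fx => [-> [-> ->]]; done.
  have A := pt z zx; have B := F1 z zx; have C := F2 z.
  rewrite ?(negbTE zx).
  case: (eqVneq z y1) => [ez1|zy1]; case: (eqVneq z y2) => [ez2|zy2] /=;
    subst; lia.
case: key => y1 [y2 [_ _ hy]].
have : \sum_(y : T) (da y + db y + (y == y1) + (y == y2)) <=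
        \sum_(y : T) (dx y + dx y + (y == x) + (y == x)).
  by apply: leq_sum => y _; exact: hy.
rewrite !big_split /= !sum_ind1 /Tr -/da -/db -/dx.
rewrite /da /db /dx; lia.
Qed.

Lemma through (T : finType) (e : rel T) (x : T) (P : pred T) :
  (forall p q, connect e p q) ->
  (forall z z', P z -> e z z' -> P z' \/ z' = x) ->
  forall n p q, P p -> ~~ P q -> walk_of_len e n p q ->
  dist e p x + dist e x q <= n.
Proof.
move=> conn cl; elim=> [|n IH] p q Pp Pq.
  by rewrite walk0 => /eqP epq; move: Pq; rewrite -epq Pp.
move=> /walkS [z epz wz].
case: (cl _ _ Pp epz) => [Pz|zx].
  have := IH _ _ Pz Pq wz; have := dist_edge_l (conn z x) epz; lia.
subst z; have := dist_le wz.
have : dist e p x <= 1.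
  by apply: dist_le; apply: walk_cons epz _; rewrite walk0.
lia.
Qed.

Lemma convex_gen (T : finType) (e : rel T) (x a b : T) (A : pred T) :
  symmetric e -> irreflexive e -> (forall p q, connect e p q) ->
  e x a -> e x b -> a \in A -> b \notin A -> x \notin A ->
  (forall z z', z \in A -> e z z' -> z' \in A \/ z' = x) ->
  2 * Tr e x <= Tr e a + Tr e b.
Proof.
move=> sym irr conn xa xb aA bA xA cl.
have ax : a != x by apply/eqP => ax; move: xa; rewrite ax irr.
have bx : b != x by apply/eqP => bx; move: xb; rewrite bx irr.
have pos p : p != x -> 0 < dist e p x.
  move=> px; rewrite lt0n; apply/eqP => /(dist0 (conn _ _)) /eqP.
  by rewrite (negbTE px).
have clB : forall z z', z \in [pred z | (z \notin A) && (z != x)] -> e z z' ->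
    z' \in [pred z | (z \notin A) && (z != x)] \/ z' = x.
  move=> z z'; rewrite !inE => /andP[zA zx] ezz'.
  case: (eqVneq z' x) => [->|z'x]; first by right.
  left; apply/andP; split => //; apply/negP => z'A.
  rewrite sym in ezz'; case: (cl _ _ z'A ezz') => [zA'|zx'].
    by rewrite zA' in zA.
  by rewrite zx' eqxx in zx.
have pt y : dist e x y + dist e x y <= dist e a y + dist e b y.
  case: (eqVneq y x) => [->|yx]; first by rewrite dist_self.
  have h1 := dist_edge_l (conn a y) xa.
  have h2 := dist_edge_l (conn b y) xb.
  case: (boolP (y \in A)) => yA.
    have := through conn clB (p := b) (q := y).
    rewrite !inE bA bx yA /= => /(_ _ isT isT (dist_walk (conn b y))).
    have := pos b bx; lia.
  have := through conn cl (p := a) (q := y) aA yA (dist_walk (conn a y)).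
  have := pos a ax; lia.
have : \sum_(y : T) (dist e x y + dist e x y) <= \sum_(y : T) (dist e a y + dist e b y).
  by apply: leq_sum => y _; exact: pt.
rewrite !big_split /= /Tr; lia.
Qed.

Lemma concave_unimodal (s : nat -> nat) k :
  (forall i, i.+1 < k -> s i + s i.+2 <= 2 * s i.+1) -> unimodal s k.
Proof.
move=> cc.
pose P t := (t == k) || (s t.+1 < s t).
have ex : exists t, P t by exists k; rewrite /P eqxx.
case: (ex_minnP ex) => t Pt tmin.
have tk : t <= k by apply: tmin; rewrite /P eqxx.
exists t => //; split.
  move=> i it; rewrite leqNgt; apply/negP => h.
  have : t <= i by apply: tmin; rewrite /P h orbT.
  by rewrite leqNgt it.
have base : t < k -> s t.+1 <= s t.
  move=> tk'; move: Pt; rewrite /P (ltn_eqF tk') /= => h; exact: ltnW.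
suff : forall d, t + d < k -> s (t + d).+1 <= s (t + d).
  move=> H i /andP[ti ik]; have := H (i - t); rewrite subnKC //; exact.
elim=> [|d IH] h; first by rewrite addn0; apply: base; rewrite addn0 in h.
have h' : t + d < k by lia.
have := IH h'; have := cc (t + d) ltac:(lia); rewrite addnS; lia.
Qed.

Lemma convex_inv_unimodal (s : nat -> nat) k :
  (forall i, i.+1 < k -> 2 * s i.+1 <= s i + s i.+2) -> inv_unimodal s k.
Proof.
move=> cc.
pose P t := (t == k) || (s t < s t.+1).
have ex : exists t, P t by exists k; rewrite /P eqxx.
case: (ex_minnP ex) => t Pt tmin.
have tk : t <= k by apply: tmin; rewrite /P eqxx.
exists t => //; split.
  move=> i it; rewrite leqNgt; apply/negP => h.
  have : t <= i by apply: tmin; rewrite /P h orbT.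
  by rewrite leqNgt it.
have base : t < k -> s t <= s t.+1.
  move=> tk'; move: Pt; rewrite /P (ltn_eqF tk') /= => h; exact: ltnW.
suff : forall d, t + d < k -> s (t + d) <= s (t + d).+1.
  move=> H i /andP[ti ik]; have := H (i - t); rewrite subnKC //; exact.
elim=> [|d IH] h; first by rewrite addn0; apply: base; rewrite addn0 in h.
have h' : t + d < k by lia.
have := IH h'; have := cc (t + d) ltac:(lia); rewrite addnS; lia.
Qed.

Theorem theorem1 (T : finType) (e : rel T)
  (e_sym : symmetric e) (e_irr : irreflexive e) (G_conn : connected e)
  (k : nat) (w : nat -> T) (hk : 2 <= k)
  (w_inj : forall i j, i <= k -> j <= k -> w i = w j -> i = j)
  (w_edge : forall i, i < k -> e (w i) (w i.+1))
  (w_deg : forall i, 0 < i < k -> deg e (w i) = 2) :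
  let H := [set x | ~~ [exists i : 'I_k.+1, (0 < i < k) && (x == w i)]] in
  (connected_on e H -> unimodal (fun i => Tr e (w i)) k) /\
  (~ connected_on e H -> inv_unimodal (fun i => Tr e (w i)) k).
Proof.
move=> H.
have conn : forall p q, connect e p q := G_conn.
have intH i : 0 < i < k -> w i \notin H.
  move=> hi; rewrite /H inE negbK; apply/existsP.
  have hi' : i < k.+1 by lia.
  by exists (Ordinal hi'); rewrite /= hi eqxx.
have notH z : z \notin H -> exists2 i, 0 < i < k & z = w i.
  by rewrite /H inE negbK => /existsP [i /andP[hi /eqP ->]]; exists i.
have winj' i j : i <= k -> j <= k -> i != j -> w i != w j.
  move=> ik jk ij; apply/eqP => h; have := w_inj _ _ ik jk h; apply/eqP; exact: ij.
have w0H : w 0 \in H.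
  rewrite /H inE; apply/existsP => [[i /andP[hi /eqP h]]].
  have := w_inj 0 i ltac:(lia) ltac:(have := ltn_ord i; lia) h; lia.
have wkH : w k \in H.
  rewrite /H inE; apply/existsP => [[i /andP[hi /eqP h]]].
  have := w_inj k i ltac:(lia) ltac:(have := ltn_ord i; lia) h; lia.
have nbr j z : 0 < j < k -> e (w j) z -> z = w j.-1 \/ z = w j.+1.
  move=> hj ez; apply: (nbr2 (w_deg _ hj)) ez.
  - have hj1 : j.-1.+1 = j by lia.
    by have := w_edge j.-1 ltac:(lia); rewrite hj1 e_sym.
  - apply: w_edge; lia.
  - apply: winj'; lia.
split.
  move=> cH; apply: concave_unimodal => i hi.
  pose R' := [rel p q | [&& p != w i.+1, q != w i.+1 & e p q]].
  have R'sym : symmetric R'.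
    by move=> p q /=; rewrite e_sym; case: (p != _); case: (q != _).
  have low j : j <= i -> connect R' (w 0) (w j).
    elim: j => [|j IH] hj; first exact: connect0.
    apply: connect_trans (IH ltac:(lia)) (connect1 _).
    rewrite /= w_edge ?andbT; last lia.
    by rewrite !winj' //; lia.
  have high d j : j = k - d -> i.+2 <= j -> connect R' (w j) (w k).
    elim: d j => [|d IH] j hj hij.
      by rewrite hj subn0; exact: connect0.
    apply: connect_trans (connect1 _) (IH j.+1 ltac:(lia) ltac:(lia)).
    rewrite /= w_edge ?andbT; last lia.
    by rewrite !winj' //; lia.
  have mid : connect R' (w 0) (w k).
    apply: (connect_sub _ (cH _ _ w0H wkH)) => p q /= /and3P[pH qH epq].
    apply: connect1; rewrite /= epq andbT.
    have xH := intH i.+1 ltac:(lia).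
    by apply/andP; split; apply/eqP => h; move: xH; rewrite -h ?pH ?qH.
  have hlow : connect R' (w i) (w 0).
    by rewrite (sym_connect_sym R'sym); apply: low.
  have hhigh : connect R' (w k) (w i.+2).
    by rewrite (sym_connect_sym R'sym); apply: (high (k - i.+2)); lia.
  apply: (concave_gen (x := w i.+1)) => //.
  - apply: winj'; lia.
  - rewrite e_sym; apply: w_edge; lia.
  - apply: w_edge; lia.
  - move=> z ez; exact: (nbr i.+1 z ltac:(lia) ez).
  - exact: connect_trans hlow (connect_trans mid hhigh).
move=> ncH.
pose R := [rel a b | [&& a \in H, b \in H & e a b]].
have Rsym : symmetric R.
  by move=> p q /=; rewrite e_sym; case: (p \in H); case: (q \in H).
have RH p q : connect R p q -> p \in H -> q \in H.
  case/connectP => s; elim: s p => [|z s IH] p /=; first by move=> _ ->.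
  by move=> /andP[/and3P[_ zH _] ps] lp _; apply: (IH z).
have toUV y : y \in H -> connect R y (w 0) \/ connect R y (w k).
  move=> yH; case/connectP: (conn y (w 0)) => s.
  elim: s y yH => [|z s IH] y yH /=.
    by move=> _ ->; left; exact: connect0.
  move=> /andP[eyz ps] lz.
  case: (boolP (z \in H)) => zH.
    have Ryz : R y z by rewrite /= yH zH eyz.
    case: (IH z zH ps lz) => h; [left|right]; exact: connect_trans (@connect1 _ R _ _ Ryz) h.
  case: (notH z zH) => j hj ezj; subst z.
  rewrite e_sym in eyz; case: (nbr j y hj eyz) => ey.
    case: (eqVneq j.-1 0) => [j0|j0].
      by left; rewrite ey j0; exact: connect0.
    by move: yH; rewrite ey (negbTE (intH _ _)) //; lia.
  case: (eqVneq j.+1 k) => [jk|jk].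
    by right; rewrite ey jk; exact: connect0.
  by move: yH; rewrite ey (negbTE (intH _ _)) //; lia.
have nUV : ~ connect R (w 0) (w k).
  move=> cuv; apply: ncH => p q pH qH.
  have Rc := sym_connect_sym Rsym.
  have cvu : connect R (w k) (w 0) by rewrite Rc.
  case: (toUV p pH) => hp; case: (toUV q qH) => hq; rewrite Rc in hq.
  - exact: connect_trans hp hq.
  - exact: connect_trans hp (connect_trans cuv hq).
  - exact: connect_trans hp (connect_trans cvu hq).
  - exact: connect_trans hp hq.
apply: convex_inv_unimodal => i hi.
set m := i.+1.
pose A := [pred z | connect R (w 0) z || [exists j : 'I_m, z == w j]].
have case1 z z' : connect R (w 0) z -> e z z' -> z' \in A \/ z' = w m.
  move=> cz ezz'; have zH := RH _ _ cz w0H.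
  case: (boolP (z' \in H)) => z'H.
    left; rewrite inE /=; apply/orP; left.
    by apply: connect_trans cz (connect1 _); rewrite /= zH z'H ezz'.
  case: (notH z' z'H) => j hj ez'; subst z'.
  rewrite e_sym in ezz'; case: (nbr j z hj ezz') => ez.
    case: (eqVneq j.-1 0) => [j0|j0]; last first.
      by move: zH; rewrite ez (negbTE (intH _ _)) //; lia.
    have j1 : j = 1 by lia.
    case: (eqVneq m 1) => [m1|m1].
      by right; rewrite j1 -m1.
    left; rewrite inE /=; apply/orP; right; apply/existsP.
    have h1 : 1 < m by rewrite /m; lia.
    by exists (Ordinal h1); rewrite j1.
  case: (eqVneq j.+1 k) => [jk|jk]; last first.
    by move: zH; rewrite ez (negbTE (intH _ _)) //; lia.
  by exfalso; apply: nUV; rewrite -jk -ez.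
have cl z z' : z \in A -> e z z' -> z' \in A \/ z' = w m.
  rewrite inE /= => /orP[cz|/existsP[j /eqP ez]] ezz'; first exact: case1 cz ezz'.
  case: (eqVneq (nat_of_ord j) 0) => [j0|j0].
    by apply: (case1 z); rewrite // ez j0; exact: connect0.
  have hj : 0 < j < k by have := ltn_ord j; move: j0 hi; rewrite /m; lia.
  rewrite ez in ezz'; case: (nbr j z' hj ezz') => ez'.
    left; rewrite inE /=; apply/orP; right; apply/existsP.
    have h1 : j.-1 < m by have := ltn_ord j; lia.
    by exists (Ordinal h1); rewrite ez'.
  case: (eqVneq j.+1 m) => [jm|jm].
    by right; rewrite ez' jm.
  left; rewrite inE /=; apply/orP; right; apply/existsP.
  have h1 : j.+1 < m by have := ltn_ord j; lia.
  by exists (Ordinal h1); rewrite ez'.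
have xA : w m \notin A.
  rewrite inE /= negb_or; apply/andP; split.
    apply/negP => c; have := RH _ _ c w0H; rewrite (negbTE (intH _ _)) //; rewrite /m; lia.
  apply/existsP => [[j /eqP h]]; have := w_inj _ _ _ _ h.
  have := ltn_ord j; rewrite /m; lia.
have aA : w i \in A.
  rewrite inE /=; apply/orP; right; apply/existsP.
  have h1 : i < m by rewrite /m.
  by exists (Ordinal h1).
have bA : w i.+2 \notin A.
  rewrite inE /= negb_or; apply/andP; split.
    apply/negP => c; have := RH _ _ c w0H.
    case: (eqVneq i.+2 k) => [ik|ik].
      by move=> _; apply: nUV; rewrite -ik.
    by rewrite (negbTE (intH _ _)) //; lia.
  apply/existsP => [[j /eqP h]]; have := w_inj _ _ _ _ h.
  have := ltn_ord j; rewrite /m; lia.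
apply: (convex_gen (x := w i.+1) (A := A)) => //.
- rewrite e_sym; apply: w_edge; lia.
- apply: w_edge; lia.
Qed.
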